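(* Let $p\in\mathcal{X}$. Then there exists a pathless polynomial $q\in\mathcal{X}$ such that $p\equiv q \pmod{\mathcal{J}}$.
   Context: Let $\mathbf{k}$ be a commutative ring, let $\beta,\alpha\in\mathbf{k}$, and let $n$ be a positive integer; write $[m]=\{1,2,\dots,m\}$. Let $\mathcal{X}=\mathbf{k}[x_{i,j}\mid 1\le i<j\le n]$ be the polynomial ring over $\mathbf{k}$ in the $n(n-1)/2$ indeterminates $x_{i,j}$, and let $\mathfrak{M}$ be the set of monomials (without coefficients) in these indeterminates. Let $\mathcal{J}$ be the ideal of $\mathcal{X}$ generated by all elements $x_{i,j}x_{j,k}-x_{i,k}(x_{i,j}+x_{j,k}+\beta)-\alpha$ for $1\le i<j<k\le n$. A monomial $\mathfrak{m}\in\mathfrak{M}$ is pathless if there is no triple $(i,j,k)$ with $1\le i<j<k\le n$ and $x_{i,j}x_{j,k}\mid\mathfrak{m}$. A polynomial in $\mathcal{X}$ is pathless if it is a $\mathbf{k}$-linear combination of pathless monomials. *)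

(* Defs.v *)
From HB Require Import structures.
From mathcomp Require Import all_boot all_order all_algebra.
Set Implicit Arguments. Unset Strict Implicit. Unset Printing Implicit Defensive.
Import GRing.Theory.
Local Open Scope ring_scope.

(* A variable x_{i,j} is the pair (i,j); it is a variable of X iff 1 <= i < j <= n. *)
Definition var := (nat * nat)%type.
Definition valid_var (n : nat) (v : var) : bool := [&& 0 < v.1, v.1 < v.2 & v.2 <= n]%N.

(* A monomial is a finite multiset of variables, represented by a sequence
   (two sequences denote the same monomial iff they are permutations). *)
Definition monomial := seq var.

Definition mpoly (k : comPzRingType) := seq (k * monomial)%type.

Definition valid_poly (k : comPzRingType) (n : nat) (p : mpoly k) : bool :=
  all (fun t => all (valid_var n) t.2) p.

(* Coefficient of the monomial m in p: two representations denote the same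
   polynomial iff all coefficients agree. *)
Definition coef (k : comPzRingType) (p : mpoly k) (m : monomial) : k :=
  \sum_(t <- p | perm_eq t.2 m) t.1.

Definition pmul (k : comPzRingType) (p q : mpoly k) : mpoly k :=
  [seq (a.1 * b.1, a.2 ++ b.2) | a <- p, b <- q].

Definition valid_triple (n : nat) (t : nat * nat * nat) : bool :=
  [&& 0 < t.1.1, t.1.1 < t.1.2, t.1.2 < t.2 & t.2 <= n]%N.

Definition genJ (k : comPzRingType) (beta alpha : k) (t : nat * nat * nat) : mpoly k :=
  let: (i, j, l) := t in
  [:: (1, [:: (i, j); (j, l)]);
      (-1, [:: (i, l); (i, j)]);
      (-1, [:: (i, l); (j, l)]);
      (- beta, [:: (i, l)]);
      (- alpha, [::])].

Definition congJ (k : comPzRingType) (n : nat) (beta alpha : k) (p q : mpoly k) : Prop :=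
  exists s : seq (mpoly k * (nat * nat * nat)),
    all (fun t => valid_poly n t.1) s /\ all (fun t => valid_triple n t.2) s /\
    forall m : monomial,
      coef p m = coef q m + coef (flatten [seq pmul t.1 (genJ beta alpha t.2) | t <- s]) m.

Definition pathless_mono (n : nat) (m : monomial) : Prop :=
  forall i j l : nat, (0 < i)%N -> (i < j)%N -> (j < l)%N -> (l <= n)%N ->
    ~ ((i, j) \in m /\ (j, l) \in m).

Definition pathless (k : comPzRingType) (n : nat) (q : mpoly k) : Prop :=
  forall t, t \in q -> pathless_mono n t.2.

(* Main.v *)
Require Import Defs.
From mathcomp Require Import all_boot all_order all_algebra.
From mathcomp Require Import ring zify.
From Stdlib Require Import Classical.
Set Implicit Arguments. Unset Strict Implicit. Unset Printing Implicit Defensive.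
Import GRing.Theory.

Section Aux.
Variables (k : comPzRingType) (beta alpha : k) (n : nat).
Local Open Scope ring_scope.

Lemma coef_cat (p q : mpoly k) m : coef (p ++ q) m = coef p m + coef q m.
Proof. by rewrite /coef big_cat. Qed.

Lemma congJ_refl (p : mpoly k) : congJ n beta alpha p p.
Proof. exists [::]; split => // ; split => // m; by rewrite /coef big_nil addr0. Qed.

Lemma congJ_cat (p1 q1 p2 q2 : mpoly k) :
  congJ n beta alpha p1 q1 -> congJ n beta alpha p2 q2 ->
  congJ n beta alpha (p1 ++ p2) (q1 ++ q2).
Proof.
move=> [s1 [v1 [t1 e1]]] [s2 [v2 [t2 e2]]].
exists (s1 ++ s2); split; first by rewrite all_cat v1 v2.
split; first by rewrite all_cat t1 t2.
move=> m; rewrite map_cat flatten_cat !coef_cat e1 e2.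
by rewrite -!addrA; congr (_ + _); rewrite addrCA.
Qed.

Lemma congJ_trans (p q r : mpoly k) :
  congJ n beta alpha p q -> congJ n beta alpha q r -> congJ n beta alpha p r.
Proof.
move=> [s1 [v1 [t1 e1]]] [s2 [v2 [t2 e2]]].
exists (s2 ++ s1); split; first by rewrite all_cat v1 v2.
split; first by rewrite all_cat t1 t2.
move=> m; rewrite map_cat flatten_cat !coef_cat e1 e2.
by rewrite addrA.
Qed.

Definition w (m : monomial) : nat := sumn [seq (n - (v.2 - v.1))%N | v <- m].

Lemma step (c : k) (m rest : monomial) (i j l : nat) :
  all (valid_var n) rest -> valid_triple n (i, j, l) ->
  perm_eq m ([:: (i, j); (j, l)] ++ rest) ->
  congJ n beta alpha [:: (c, m)]
    [:: (c, rest ++ [:: (i, l); (i, j)]); (c, rest ++ [:: (i, l); (j, l)]);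
        (c * beta, rest ++ [:: (i, l)]); (c * alpha, rest)].
Proof.
move=> hr ht hp.
exists [:: ([:: (c, rest)], (i, j, l))]; split; first by rewrite /= /valid_poly /= hr.
split; first by rewrite /= ht.
move=> m'.
rewrite /coef /= !big_cons !big_nil /=.
have -> : perm_eq (rest ++ [:: (i, j); (j, l)]) m' = perm_eq m m'.
  apply: (permPl _); rewrite perm_sym; apply: perm_trans hp _.
  by rewrite perm_catC.
rewrite cats0.
case: (perm_eq m m'); case: (perm_eq (rest ++ [:: (i, l); (i, j)]) m');
case: (perm_eq (rest ++ [:: (i, l); (j, l)]) m');
case: (perm_eq (rest ++ [:: (i, l)]) m'); case: (perm_eq rest m'); ring.
Qed.

Lemma single N : forall m, (w m < N)%N -> all (valid_var n) m -> forall c : k,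
  exists q, valid_poly n q /\ pathless n q /\ congJ n beta alpha [:: (c, m)] q.
Proof.
elim: N => [//|N IH] m hw hm c.
case: (classic (exists i j l, [/\ (0 < i)%N, (i < j)%N, (j < l)%N, (l <= n)%N &
          (i, j) \in m /\ (j, l) \in m])) => [[i [j [l [h1 h2 h3 h4 [hij hjl]]]]]|hno].
- set rest := rem (j, l) (rem (i, j) m).
  have p1 := perm_to_rem hij.
  have hjl' : (j, l) \in rem (i, j) m.
    move: hjl; rewrite (perm_mem p1) inE => /orP [/eqP [e1 e2]|//].
    by move: h2; rewrite e1 ltnn.
  have p2 := perm_to_rem hjl'.
  have hp : perm_eq m ([:: (i, j); (j, l)] ++ rest).
    apply: perm_trans p1 _; by rewrite /= perm_cons.
  have hall : all (valid_var n) ([:: (i, j); (j, l)] ++ rest) by rewrite -(perm_all _ hp).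
  move: hall => /= /andP [_ /andP [_ hr]].
  have ht : valid_triple n (i, j, l) by rewrite /valid_triple /= h1 h2 h3 h4.
  have wcat : forall s t, w (s ++ t) = (w s + w t)%N.
    by move=> s t; rewrite /w map_cat sumn_cat.
  have hwm : w m = w ([:: (i, j); (j, l)] ++ rest) by apply: perm_sumn; exact: perm_map.
  have hv : forall s, all (valid_var n) s -> all (valid_var n) (rest ++ s).
    by move=> s hs; rewrite all_cat hr hs.
  have wcons : forall v s, w (v :: s) = (n - (v.2 - v.1) + w s)%N by [].
  have w0 : w [::] = 0%N by [].
  rewrite hwm wcat !wcons w0 /= in hw.
  have [q1 [v1 [l1 c1]]] : exists q, valid_poly n q /\ pathless n q /\
      congJ n beta alpha [:: (c, rest ++ [:: (i, l); (i, j)])] q.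
    apply: IH; last by apply: hv; rewrite /= /valid_var /=; lia.
    rewrite wcat !wcons w0 /=; lia.
  have [q2 [v2 [l2 c2]]] : exists q, valid_poly n q /\ pathless n q /\
      congJ n beta alpha [:: (c, rest ++ [:: (i, l); (j, l)])] q.
    apply: IH; last by apply: hv; rewrite /= /valid_var /=; lia.
    rewrite wcat !wcons w0 /=; lia.
  have [q3 [v3 [l3 c3]]] : exists q, valid_poly n q /\ pathless n q /\
      congJ n beta alpha [:: (c * beta, rest ++ [:: (i, l)])] q.
    apply: IH; last by apply: hv; rewrite /= /valid_var /=; lia.
    rewrite wcat !wcons w0 /=; lia.
  have [q4 [v4 [l4 c4]]] : exists q, valid_poly n q /\ pathless n q /\
      congJ n beta alpha [:: (c * alpha, rest)] q.
    apply: IH => //; lia.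
  exists (q1 ++ (q2 ++ (q3 ++ q4))); split.
    by rewrite /valid_poly !all_cat -!/(valid_poly n _) v1 v2 v3 v4.
  split.
    move=> t; rewrite !mem_cat => /orP [/l1 //|/orP [/l2 //|/orP [/l3 //|/l4 //]]].
  apply: congJ_trans (step c hr ht hp) _.
  apply: (congJ_cat c1); apply: (congJ_cat c2); exact: (congJ_cat c3).
- exists [:: (c, m)]; split; first by rewrite /valid_poly /= hm.
  split; last exact: congJ_refl.
  move=> t; rewrite inE => /eqP -> /= i j l h1 h2 h3 h4 hh.
  by apply: hno; exists i, j, l.
Qed.
End Aux.

Theorem proposition2p5 (k : comPzRingType) (beta alpha : k) (n : nat)
  (hn : (0 < n)%N) (p : mpoly k) (hp : valid_poly n p) :
  exists q : mpoly k, valid_poly n q /\ pathless n q /\ congJ n beta alpha p q.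
Proof.
elim: p hp => [|[c m] p IH] hp.
  by exists [::]; split => //; split => //; exact: congJ_refl.
move: hp; rewrite /valid_poly /= => /andP [hm hp].
have [q1 [v1 [l1 c1]]] := single beta alpha (N := (w n m).+1) (ltnSn _) hm c.
have [q2 [v2 [l2 c2]]] := IH hp.
exists (q1 ++ q2); split; first by rewrite /valid_poly all_cat -!/(valid_poly n _) v1 v2.
split; first by move=> t; rewrite mem_cat => /orP [/l1|/l2].
exact: (congJ_cat c1 c2).
Qed.
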